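(* Let $\mathbf{M}\in\mathbb{R}^{N\times N}$ be symmetric with eigenvalues $\lambda_1>\lambda_2\ge\lambda_3\ge\cdots\ge\lambda_N$, and let $g(\bm{x})=-\tfrac12\bm{x}^\top\mathbf{M}\bm{x}$ be restricted to the unit sphere $\mathbb{S}^{N-1}$. Set $\epsilon=0.2(\lambda_1-\lambda_2)$ and $\eta=0.3(\lambda_1-\lambda_2)$. Then for every $\bm{x}\in\mathbb{S}^{N-1}$ with $\|\mathrm{grad}\,g(\bm{x})\|_2\le\epsilon$ we have $|\lambda_{\min}(\mathrm{hess}\,g(\bm{x}))|\ge\eta$.
   Context: $\mathbb{S}^{N-1}=\{\bm{x}\in\mathbb{R}^N:\|\bm{x}\|_2=1\}$. The Riemannian gradient and Hessian of $g$ on the sphere are $\mathrm{grad}\,g(\bm{x})=(\bm{x}\bm{x}^\top-\mathbf{I}_N)\mathbf{M}\bm{x}$ and $\mathrm{hess}\,g(\bm{x})=(\mathbf{I}_N-\bm{x}\bm{x}^\top)(\bm{x}^\top\mathbf{M}\bm{x}\,\mathbf{I}_N-\mathbf{M})(\mathbf{I}_N-\bm{x}\bm{x}^\top)$, the latter regarded as a quadratic form on the tangent space $\mathcal{T}_{\bm{x}}\mathbb{S}^{N-1}=\{\bm{u}\in\mathbb{R}^N:\bm{x}^\top\bm{u}=0\}$; thus $\lambda_{\min}(\mathrm{hess}\,g(\bm{x}))=\min\{\bm{u}^\top\mathrm{hess}\,g(\bm{x})\bm{u}:\bm{u}\in\mathcal{T}_{\bm{x}}\mathbb{S}^{N-1},\|\bm{u}\|_2=1\}=\min\{\bm{x}^\top\mathbf{M}\bm{x}-\bm{u}^\top\mathbf{M}\bm{u}:\bm{x}^\top\bm{u}=0,\|\bm{u}\|_2=1\}$.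 *)

(* Defs.v *)
From HB Require Import structures.
From mathcomp Require Import all_boot all_order all_algebra.
From mathcomp Require Import classical_sets reals.
Set Implicit Arguments. Unset Strict Implicit. Unset Printing Implicit Defensive.
Import Order.TTheory GRing.Theory Num.Theory.
Local Open Scope ring_scope.
Local Open Scope classical_set_scope.

Section Defs.
Variables (R : realType) (N : nat).

Definition dotv (u v : 'cV[R]_N) : R := (u^T *m v) 0 0.
Definition norm2 (u : 'cV[R]_N) : R := Num.sqrt (dotv u u).

Definition on_sphere (x : 'cV[R]_N) : Prop := norm2 x = 1.
Definition tangent (x u : 'cV[R]_N) : Prop := dotv x u = 0.

Definition g (M : 'M[R]_N) (x : 'cV[R]_N) : R := - (1 / 2) * dotv x (M *m x).

Definition rgrad (M : 'M[R]_N) (x : 'cV[R]_N) : 'cV[R]_N :=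
  (x *m x^T - 1%:M) *m M *m x.

Definition rhess (M : 'M[R]_N) (x : 'cV[R]_N) : 'M[R]_N :=
  (1%:M - x *m x^T) *m (dotv x (M *m x) *: 1%:M - M) *m (1%:M - x *m x^T).

(* smallest eigenvalue of the Hessian as a quadratic form on the tangent space:
   min { u^T hess u : x^T u = 0, ||u||_2 = 1 }  (taken as an infimum in R) *)
Definition lambda_min_hess (M : 'M[R]_N) (x : 'cV[R]_N) : R :=
  inf [set dotv u (rhess M x *m u) | u in [set u | tangent x u /\ norm2 u = 1]].

End Defs.

(* Main.v *)
Require Import Defs.
From HB Require Import structures.
From mathcomp Require Import all_boot all_order all_algebra.
From mathcomp Require Import classical_sets reals.
From mathcomp Require Import complex sesquilinear spectral.
From mathcomp Require Import ring lra.
Import Order.TTheory GRing.Theory Num.Theory.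
Local Open Scope ring_scope.
Set Implicit Arguments. Unset Strict Implicit. Unset Printing Implicit Defensive.
Section Real.
Variables (R : realType) (N : nat).
Implicit Types (u v w x : 'cV[R]_N).

Lemma dotvE u v : dotv u v = \sum_i u i 0 * v i 0.
Proof. by rewrite /dotv mxE; apply: eq_bigr => i _; rewrite mxE. Qed.

Lemma dotvC u v : dotv u v = dotv v u.
Proof. by rewrite !dotvE; apply: eq_bigr => i _; rewrite mulrC. Qed.

Lemma dotvDr u v w : dotv u (v + w) = dotv u v + dotv u w.
Proof. by rewrite !dotvE -big_split; apply: eq_bigr => i _; rewrite mxE mulrDr. Qed.

Lemma dotvZr a u v : dotv u (a *: v) = a * dotv u v.
Proof. by rewrite !dotvE mulr_sumr; apply: eq_bigr => i _; rewrite mxE mulrCA. Qed.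

Lemma dotvNr u v : dotv u (- v) = - dotv u v.
Proof. by rewrite -scaleN1r dotvZr mulN1r. Qed.

Lemma dotvBr u v w : dotv u (v - w) = dotv u v - dotv u w.
Proof. by rewrite dotvDr dotvNr. Qed.

Lemma dotvDl u v w : dotv (v + w) u = dotv v u + dotv w u.
Proof. by rewrite dotvC dotvDr !(dotvC u). Qed.

Lemma dotvZl a u v : dotv (a *: v) u = a * dotv v u.
Proof. by rewrite dotvC dotvZr dotvC. Qed.

Lemma dotvBl u v w : dotv (v - w) u = dotv v u - dotv w u.
Proof. by rewrite dotvC dotvBr !(dotvC u). Qed.

Lemma dotv_mul (B : 'M[R]_N) u v : dotv u (B *m v) = dotv (B^T *m u) v.
Proof. by rewrite /dotv trmx_mul trmxK mulmxA. Qed.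

Lemma dotv_ge0 u : 0 <= dotv u u.
Proof. by rewrite dotvE sumr_ge0 // => i _; rewrite -expr2 sqr_ge0. Qed.

Lemma dotv_eq0 u : dotv u u = 0 -> u = 0.
Proof.
rewrite dotvE => /eqP; rewrite psumr_eq0 => [/allP H|i _]; last by rewrite -expr2 sqr_ge0.
apply/matrixP => i j; rewrite ord1 mxE.
by have /implyP/(_ isT) := H i (mem_index_enum _); rewrite mulf_eq0 orbb => /eqP.
Qed.

Lemma dotv_delta (i : 'I_N) v : dotv (delta_mx i 0) v = v i 0.
Proof.
rewrite dotvE (bigD1 i) //= big1 ?addr0 => [|j ji]; rewrite !mxE.
  by rewrite !eqxx mul1r.
by rewrite (negbTE ji) mul0r.
Qed.

Lemma norm2_1 u : (norm2 u = 1) <-> (dotv u u = 1).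
Proof.
rewrite /norm2; split => [H|->]; last by rewrite sqrtr1.
by rewrite -(sqr_sqrtr (dotv_ge0 u)) H expr1n.
Qed.

Lemma mx11_mul (x : 'cV[R]_N) (B : 'M[R]_1) : x *m B = B 0 0 *: x.
Proof. by rewrite {1}[B]mx11_scalar mul_mx_scalar. Qed.

Lemma rgradE (M : 'M[R]_N) x : rgrad M x = dotv x (M *m x) *: x - M *m x.
Proof.
rewrite /rgrad mulmxBl mul1mx mulmxBl -!mulmxA mx11_mul.
by rewrite /dotv mulmxA.
Qed.

Lemma rhessE (M : 'M[R]_N) x u : dotv x u = 0 ->
  dotv u (rhess M x *m u) = dotv x (M *m x) * dotv u u - dotv u (M *m u).
Proof.
move=> xu; set P := 1%:M - x *m x^T.
have Pu : P *m u = u.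
  by rewrite /P mulmxBl mul1mx -mulmxA mx11_mul -/(dotv x u) xu scale0r subr0.
have PT : P^T = P by rewrite /P linearB /= trmx1 trmx_mul trmxK.
rewrite /rhess -/P -!mulmxA Pu dotv_mul PT Pu.
by rewrite mulmxBl dotvBr -scalemxAl mul1mx dotvZr.
Qed.

End Real.

Lemma char_poly_sim (F : fieldType) n (Q P D : 'M[F]_n) :
  Q *m P = 1%:M -> char_poly (Q *m D *m P) = char_poly D.
Proof.
move=> QP; rewrite /char_poly /char_poly_mx !map_mxM.
set Qp := map_mx _ Q; set Pp := map_mx _ P; set Dp := map_mx _ D.
have QPp : Qp *m Pp = 1%:M by rewrite -map_mxM QP map_mx1.
have -> : 'X%:M - Qp *m Dp *m Pp = Qp *m ('X%:M - Dp) *m Pp.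
  by rewrite mulmxBr mulmxBl scalar_mxC -(mulmxA _ Qp) QPp mulmx1.
rewrite !det_mulmx mulrC mulrA -det_mulmx.
by rewrite det_mulmx [\det Pp * _]mulrC -det_mulmx QPp det1 mul1r.
Qed.


Lemma count_ordE n (p : pred 'I_n) : count p (enum 'I_n) = (\sum_(i < n | p i) 1)%N.
Proof. by rewrite -sum1_count big_enum_cond. Qed.

Section Spec.
Variables (R : realType) (N : nat) (M : 'M[R]_N).
Hypothesis Msym : M^T = M.
Local Notation C := (R[i]).
Definition mc m n (B : 'M[R]_(m,n)) : 'M[C]_(m,n) := map_mx (real_complex R) B.

Lemma conj_real (r : R) : Num.conj ((r%:C)%C : C) = (r%:C)%C.
Proof. exact: (conjc_real r). Qed.

Lemma mc_tc m n (B : 'M[R]_(m,n)) : map_mx Num.conj ((mc B)^T) = mc B^T.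
Proof. by apply/matrixP => i j; rewrite !mxE conj_real. Qed.

Definition A := mc M.
Lemma A_normal : A \is normalmx.
Proof.
apply/eqP; rewrite /A mc_tc Msym //.
Qed.

Definition P := spectralmx A.
Definition d := spectral_diag A.
Lemma Aeq : A = invmx P *m diag_mx d *m P.
Proof. exact/orthomx_spectralP/A_normal. Qed.
Lemma PtP : map_mx Num.conj P^T *m P = 1%:M.
Proof. rewrite -invmx_unitary ?spectral_unitarymx //. apply: mulVmx. exact: spectral_unit. Qed.

Lemma mcM m n p (B : 'M[R]_(m,n)) (D : 'M[R]_(n,p)) : mc (B *m D) = mc B *m mc D.
Proof. exact: map_mxM. Qed.

Definition Y (u : 'cV[R]_N) : 'cV[C]_N := P *m mc u.



Lemma I1 (u v : 'cV[R]_N) :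
  (dotv u v)%:C%C = \sum_i Num.conj (Y u i 0) * Y v i 0.
Proof.
have -> : (dotv u v)%:C%C = (mc (u^T *m v)) 0 0 by rewrite mxE.
rewrite mcM -mc_tc -[mc v]mul1mx -PtP mulmxA.
rewrite mulmxA -map_mxM -trmx_mul -/(Y u) -mulmxA -/(Y v) mxE.
by apply: eq_bigr => i _; rewrite !mxE.
Qed.

Lemma I3 (v : 'cV[R]_N) : Y (M *m v) = diag_mx d *m Y v.
Proof.
rewrite /Y mcM -/A Aeq !mulmxA mulmxV ?spectral_unit // mul1mx.
by rewrite -!mulmxA.
Qed.


Lemma charA : char_poly A = \prod_(i < N) ('X - (d 0 i)%:P).
Proof.
rewrite {1}Aeq char_poly_sim; last by apply: mulVmx; exact: spectral_unit.
rewrite char_poly_trig ?diag_mx_is_trig //.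
by apply: eq_bigr => i _; rewrite mxE eqxx mulr1n.
Qed.


Variable lam : nat -> R.
Hypothesis charM : char_poly M = \prod_(i < N) ('X - (lam i)%:P).
Hypothesis lam_sorted : forall i j : nat, (i <= j < N)%N -> lam j <= lam i.
Hypothesis gap : lam 1 < lam 0.
Hypothesis HN : (1 < N)%N.

Lemma charA2 : char_poly A = \prod_(i < N) ('X - ((lam i)%:C%C)%:P).
Proof.
rewrite /A /mc -map_char_poly charM rmorph_prod.
by apply: eq_bigr => i _; rewrite /= map_polyXsubC.
Qed.

Let s := [seq d 0 i | i <- enum 'I_N].
Let t := [seq (lam (nat_of_ord i))%:C%C | i : 'I_N <- enum 'I_N].

Lemma st_perm : perm_eq s t.
Proof.
apply: prod_XsubC_eq; rewrite !big_map; exact: (etrans (esym charA) charA2).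
Qed.

Lemma d_lam i : exists j : 'I_N, d 0 i = (lam j)%:C%C.
Proof.
have : d 0 i \in t by rewrite -(perm_mem st_perm); apply: map_f; rewrite mem_enum.
by case/mapP => j _ ->; exists j.
Qed.

Lemma lam_lt0 (j : 'I_N) : j != 0%N :> nat -> lam j <= lam 1.
Proof.
move=> j0; apply: lam_sorted; rewrite ltn_ord andbT; by rewrite lt0n.
Qed.

Lemma count_t : count_mem ((lam 0)%:C%C) t = 1%N.
Proof.
rewrite count_map count_ordE (bigD1 (Ordinal (ltnW HN))) ?eqxx //=.
rewrite big_pred0 // => j; apply/negbTE/andP => [[/eqP/complexI Ej Hj]].
have j0 : j != 0%N :> nat by apply: contra Hj => /eqP j0; apply/eqP/val_inj.
by have := lam_lt0 j0; rewrite Ej leNgt gap.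
Qed.


Definition dr (i : 'I_N) : R := complex.Re (d 0 i).

Lemma d_real i : d 0 i = (dr i)%:C%C.
Proof. by rewrite /dr; have [j ->] := d_lam i. Qed.

Lemma d_top : exists k : 'I_N, dr k = lam 0 /\ forall i, i != k -> dr i <= lam 1.
Proof.
have := count_t; rewrite -(permP st_perm) count_map count_ordE => H1.
case: (pickP (fun i => d 0 i == (lam 0)%:C%C)) => [k Hk | none]; last first.
  by move: H1; rewrite big_pred0.
move: H1; rewrite (bigD1 k) //= => /eqP; rewrite eqSS => /eqP/eqP.
rewrite sum_nat_eq0 => /forallP Hall.
exists k; split; first by rewrite /dr (eqP Hk).
move=> i ik; have [j Ej] := d_lam i.
have [j0|j0] := eqVneq (nat_of_ord j) 0%N.
  have := Hall i; rewrite ik andbT.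
  have -> : d 0 i == (lam 0)%:C%C by rewrite Ej j0.
  by [].
by rewrite /dr Ej /=; apply: lam_lt0.
Qed.


Definition nsq (z : C) : R := complex.Re z ^+ 2 + complex.Im z ^+ 2.

Lemma conj_mul (z : C) : Num.conj z * z = (nsq z)%:C%C.
Proof.
case: z => a b; change (conjc (a +i* b)%C * (a +i* b)%C = ((nsq (a +i* b)%C)%:C)%C).
rewrite /nsq /=; simpc; congr (_ +i* _)%C; rewrite ?expr2; ring.
Qed.

Lemma nsq_ge0 z : 0 <= nsq z.
Proof. by rewrite /nsq addr_ge0 // sqr_ge0. Qed.

Definition wt (u : 'cV[R]_N) i := nsq (Y u i 0).

Lemma YM (u : 'cV[R]_N) i : Y (M *m u) i 0 = d 0 i * Y u i 0.
Proof. by rewrite I3 mul_diag_mx mxE. Qed.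

Lemma W1 u : dotv u u = \sum_i wt u i.
Proof.
apply: complexI; rewrite I1 rmorph_sum /=.
by apply: eq_bigr => i _; rewrite conj_mul.
Qed.

Lemma W2 u : dotv u (M *m u) = \sum_i dr i * wt u i.
Proof.
apply: complexI; rewrite I1 rmorph_sum /=.
apply: eq_bigr => i _; rewrite YM mulrCA conj_mul d_real rmorphM //.
Qed.

Lemma W3 u : dotv (M *m u) (M *m u) = \sum_i dr i ^+ 2 * wt u i.
Proof.
apply: complexI; rewrite I1 rmorph_sum /=.
apply: eq_bigr => i _; rewrite !YM rmorphM /= d_real conj_real.
rewrite mulrACA -expr2 conj_mul rmorphM rmorphXn //.
Qed.


Lemma W4 (k : 'I_N) (v1 : 'cV[R]_N) :
  (forall i, i != k -> dr i != lam 0) ->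
  M *m v1 = lam 0 *: v1 -> dotv v1 v1 = 1 ->
  forall u, (dotv v1 u) ^+ 2 = wt u k.
Proof.
move=> Hk Mv Hv u.
have Y0 i : i != k -> Y v1 i 0 = 0.
  move=> ik; have := YM v1 i; rewrite Mv /Y /mc map_mxZ /= -scalemxAr mxE.
  rewrite -/(Y v1) d_real => /eqP; rewrite -subr_eq0 -mulrBl mulf_eq0.
  case/orP => [|/eqP //]; rewrite -rmorphB /= => /eqP H.
  have : (lam 0 - dr i) = 0 by apply: complexI; rewrite H.
  by move/eqP; rewrite subr_eq0 eq_sym (negbTE (Hk i ik)).
have Hv1 : wt v1 k = 1.
  rewrite -Hv W1 (bigD1 k) //= big1 ?addr0 // => i /Y0.
  by rewrite /wt => ->; rewrite /nsq /= expr0n /= addr0.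
have Hd : (dotv v1 u)%:C%C = Num.conj (Y v1 k 0) * Y u k 0.
  rewrite I1 (bigD1 k) //= big1 ?addr0 // => i /Y0 ->.
  by rewrite conjC0 mul0r.
apply: complexI; rewrite rmorphXn /= expr2 -{1}conj_real Hd rmorphM /=.
rewrite conjCK mulrACA [Y v1 k 0 * _]mulrC !conj_mul -rmorphM /=.
by rewrite -/(wt v1 k) Hv1 mul1r.
Qed.

End Spec.

Section Geo.
Variables (R : realType) (N : nat).
Implicit Types (u v w x : 'cV[R]_N).

Lemma bessel x u v : dotv x x = 1 -> dotv u u = 1 -> dotv x u = 0 ->
  dotv v v = 1 -> (dotv v x)^+2 + (dotv v u)^+2 <= 1.
Proof.
move=> xx uu xu vv.
have := dotv_ge0 (v - dotv v x *: x - dotv v u *: u).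
rewrite !(dotvBl, dotvBr, dotvZl, dotvZr) xx uu vv xu (dotvC u x) xu.
rewrite (dotvC x v) (dotvC u v) => H; nra.
Qed.

Lemma proj_bound v r : dotv v v = 1 -> (dotv v r)^+2 <= dotv r r.
Proof.
move=> vv; have := dotv_ge0 (r - dotv v r *: v).
rewrite !(dotvBl, dotvBr, dotvZl, dotvZr) vv (dotvC r v) => H; nra.
Qed.

Lemma mk_tangent x v : dotv x x = 1 -> dotv v v = 1 -> (dotv x v)^+2 < 1 ->
  let c := dotv x v in let t := (Num.sqrt (1 - c^+2))^-1 in
  [/\ dotv x (t *: (v - c *: x)) = 0,
      dotv (t *: (v - c *: x)) (t *: (v - c *: x)) = 1 &
      t^+2 * (1 - c^+2) = 1].
Proof.
move=> xx vv hc c t.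
have s0 : 0 < 1 - c^+2 by rewrite subr_gt0.
have ht : t^+2 * (1 - c^+2) = 1.
  by rewrite /t exprVn sqr_sqrtr ?ltW // mulVf // gt_eqF.
split => //.
  by rewrite dotvZr dotvBr dotvZr xx -/c mulr1 subrr mulr0.
rewrite dotvZl dotvZr !(dotvBl, dotvBr, dotvZl, dotvZr) xx vv (dotvC v x) -/c.
rewrite -[RHS]ht; ring.
Qed.

Lemma exists_tangent x : (1 < N)%N -> dotv x x = 1 ->
  exists u, dotv x u = 0 /\ dotv u u = 1.
Proof.
move=> HN xx.
have tg (i : 'I_N) : (x i 0)^+2 < 1 -> exists u, dotv x u = 0 /\ dotv u u = 1.
  move=> hi; pose e : 'cV[R]_N := delta_mx i 0.
  have ee : dotv e e = 1 by rewrite dotv_delta mxE !eqxx.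
  have hx : dotv x e = x i 0 by rewrite dotvC dotv_delta.
  have hc : (dotv x e)^+2 < 1 by rewrite hx.
  have [h1 h2 _] := @mk_tangent x e xx ee hc.
  by eexists; split; [exact: h1 | exact: h2].
pose i0 : 'I_N := Ordinal (ltnW HN); pose i1 : 'I_N := Ordinal HN.
have [h0|h0] := ltrP ((x i0 0)^+2) 1; first exact: tg h0.
have [h1|h1] := ltrP ((x i1 0)^+2) 1; first exact: tg h1.
exfalso; move: xx; rewrite dotvE (bigD1 i0) //= (bigD1 i1) //=.
have : 0 <= \sum_(i | (i != i0) && (i != i1)) x i 0 * x i 0.
  by apply: sumr_ge0 => i _; rewrite -expr2 sqr_ge0.
rewrite -!expr2 => H; lra.
Qed.

End Geo.

Theorem theorem1 (R : realType) (N : nat) (M : 'M[R]_N) (lam : nat -> R) :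
  M^T = M ->
  (1 < N)%N ->
  char_poly M = \prod_(i < N) ('X - (lam i)%:P) ->
  (forall i j : nat, (i <= j < N)%N -> lam j <= lam i) ->
  lam 1%N < lam 0%N ->
  let eps := (lam 0%N - lam 1%N) / 5 in
  let eta := 3 * (lam 0%N - lam 1%N) / 10 in
  forall x : 'cV[R]_N, on_sphere x ->
    norm2 (rgrad M x) <= eps ->
    eta <= `| lambda_min_hess M x |.
Proof.
move=> Msym HN charM sorted gap eps eta x xS hgrad.
have xx : dotv x x = 1 by apply/norm2_1.
have [k [drk drk']] := d_top Msym charM sorted gap HN.
have [v1 Mv1 v1v1] : exists2 v1 : 'cV[R]_N, M *m v1 = lam 0%N *: v1 & dotv v1 v1 = 1.
  have : eigenvalue M (lam 0%N).
    rewrite eigenvalue_root_char; apply/rootP.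
    by rewrite charM horner_prod (bigD1 (Ordinal (ltnW HN))) //= hornerXsubC subrr mul0r.
  case/eigenvalueP => v vM v0.
  pose w := v^T.
  have Mw : M *m w = lam 0%N *: w by rewrite /w -{1}Msym -trmx_mul vM linearZ.
  have w0 : dotv w w != 0.
    by apply: contra v0 => /eqP /dotv_eq0 /(congr1 trmx); rewrite trmxK trmx0 => ->.
  have wpos : 0 < dotv w w by rewrite lt_def w0 dotv_ge0.
  exists ((Num.sqrt (dotv w w))^-1 *: w).
    by rewrite -scalemxAr Mw !scalerA mulrC.
  rewrite dotvZl dotvZr mulrA -expr2 exprVn sqr_sqrtr ?ltW //.
  by rewrite mulVf.
have Hk : forall i, i != k -> dr M i != lam 0%N.
  by move=> i /drk' H; apply/eqP => E; move: H; rewrite E leNgt gap.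
have W4' := W4 Msym charM Hk Mv1 v1v1.
set del := lam 0%N - lam 1%N.
have del0 : 0 < del by rewrite subr_gt0.
have drle : forall i, dr M i <= lam 0%N.
  move=> i; have [->|ik] := eqVneq i k; first by rewrite drk.
  by apply: le_trans (drk' i ik) (ltW gap).
have Wsum u : dotv u u = \sum_(i | i != k) wt M u i + wt M u k.
  by rewrite (W1 M) (bigD1 k) //= addrC.
have wt0 u i : 0 <= wt M u i by exact: nsq_ge0.
set rho := dotv x (M *m x).
have r2 : dotv (rgrad M x) (rgrad M x) <= eps^+2.
  have e0 : 0 <= eps by rewrite /eps divr_ge0 // ltW.
  have s0 := sqrtr_ge0 (dotv (rgrad M x) (rgrad M x)).
  rewrite -(sqr_sqrtr (dotv_ge0 (rgrad M x))).
  move: hgrad; rewrite /norm2 => h; nra.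
have rr : dotv (rgrad M x) (rgrad M x) = \sum_i dr M i ^+2 * wt M x i - rho^+2.
  rewrite rgradE !(dotvBl, dotvBr, dotvZl, dotvZr) xx (W3 Msym charM).
  rewrite (dotvC (M *m x) x) -/rho; ring.
have Hres : \sum_i (dr M i - rho)^+2 * wt M x i <= eps^+2.
  have Hsum : \sum_i wt M x i = 1 by rewrite -(W1 M) xx.
  have Hrho : rho = \sum_i dr M i * wt M x i by rewrite /rho (W2 Msym charM).
  have -> : \sum_i (dr M i - rho)^+2 * wt M x i =
     \sum_i (dr M i ^+2 * wt M x i) + (- 2 * rho) * \sum_i (dr M i * wt M x i)
     + rho^+2 * \sum_i wt M x i.
    rewrite !mulr_sumr -!big_split; apply: eq_bigr => i _ /=; ring.
  rewrite -Hrho Hsum; move: r2; rewrite rr => H; lra.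
have ray u : dotv u u = 1 -> dotv u (M *m u) <= lam 0%N.
  move=> uu; rewrite (W2 Msym charM) -[X in _ <= X]mulr1 -uu (W1 M) mulr_sumr.
  by apply: ler_sum => i _; apply: ler_wpM2r.
have rayk u : dotv u u = 1 -> dotv u (M *m u) <= lam 1%N + del * wt M u k.
  move=> uu; rewrite (W2 Msym charM) (bigD1 k) //= drk.
  have := Wsum u; rewrite uu => Hs.
  have : \sum_(i | i != k) dr M i * wt M u i <= lam 1%N * \sum_(i | i != k) wt M u i.
    by rewrite mulr_sumr; apply: ler_sum => i ik; apply: ler_wpM2r => //; apply: drk'.
  rewrite /del => H; nra.
rewrite /lambda_min_hess.
set E := (X in inf X).
have inE u : dotv x u = 0 -> dotv u u = 1 -> E (rho - dotv u (M *m u)).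
  move=> xu uu; exists u; first by split => //; apply/norm2_1.
  by rewrite rhessE // uu mulr1.
have Elb : lbound E (rho - lam 0%N).
  move=> y [u [tu /norm2_1 uu] <-]; rewrite rhessE // uu mulr1.
  by rewrite lerD2l lerN2 ray.
have hlb : has_lbound E by exists (rho - lam 0%N).
have [hA|hB] := lerP (lam 1%N + del / 2) rho.
-
  have hak : 1 - wt M x k <= 4 / 25.
    move: Hres; rewrite (bigD1 k) //=.
    have : (del / 2)^+2 * \sum_(i | i != k) wt M x i
           <= \sum_(i | i != k) (dr M i - rho)^+2 * wt M x i.
      rewrite mulr_sumr; apply: ler_sum => i ik; apply: ler_wpM2r => //.
      have := drk' i ik => hi.
      have p1 : 0 <= rho - dr M i - del / 2 by lra.
      have p2 : 0 <= rho - dr M i + del / 2 by lra.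
      have := mulr_ge0 p1 p2 => p3; nra.
    have := Wsum x; rewrite xx => Hs.
    have := wt0 x k; have : 0 <= (dr M k - rho) ^+ 2 * wt M x k.
      by apply: mulr_ge0 => //; apply: sqr_ge0.
    rewrite /eps -/del => h1 h2 h3 h4.
    have h5 : del^+2 / 4 * (1 - wt M x k) <= del^+2 / 25.
      have -> : 1 - wt M x k = \sum_(i | i != k) wt M x i by lra.
      move: h3 h4; rewrite !expr_div_n => h3 h4; lra.
    have d2 : 0 < del^+2 by rewrite exprn_gt0.
    nra.
  have [u0 [xu0 u0u0]] := exists_tangent HN xx.
  apply: (le_trans _ (ler_norm _)).
  apply: lb_le_inf; first by exists (rho - dotv u0 (M *m u0)); apply: inE.
  move=> y [u [tu /norm2_1 uu] <-]; rewrite rhessE // uu mulr1.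
  have hb := bessel xx uu tu v1v1.
  rewrite !W4' in hb.
  have hbk : 0 <= 4 / 25 - wt M u k by lra.
  have := mulr_ge0 (ltW del0) hbk => hp.
  have := rayk u uu; rewrite /eta -/del -/rho => h; lra.
-
  set c := dotv v1 x.
  have hvr : dotv v1 (rgrad M x) = (rho - lam 0%N) * c.
    rewrite rgradE dotvBr dotvZr (dotv_mul M v1 x) Msym Mv1 dotvZl -/c -/rho; ring.
  have hc2 : c^+2 <= 4 / 25.
    have := proj_bound (rgrad M x) v1v1; rewrite hvr => h.
    have h2 : ((rho - lam 0%N) * c)^+2 <= del^+2 / 25.
      by apply: le_trans h (le_trans r2 _); rewrite /eps -/del expr_div_n; lra.
    have d2 : 0 < del^+2 by rewrite exprn_gt0.
    have hdel : del = lam 0%N - lam 1%N by [].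
    have h3 : del^+2 / 4 <= (rho - lam 0%N)^+2.
      have p1 : 0 <= lam 0%N - rho - del / 2 by lra.
      have p2 : 0 <= lam 0%N - rho + del / 2 by lra.
      have := mulr_ge0 p1 p2 => p3; nra.
    rewrite exprMn in h2; nra.
  have hxv : dotv x v1 = c by rewrite dotvC.
  have hc1 : (dotv x v1)^+2 < 1 by rewrite hxv; lra.
  have [h1 h2 ht] := mk_tangent xx v1v1 hc1.
  rewrite hxv in h1 h2 ht.
  set t := (Num.sqrt (1 - c^+2))^-1 in h1 h2 ht.
  set u := t *: (v1 - c *: x) in h1 h2.
  have Eu := inE u h1 h2.
  have hMu : dotv u (M *m u) = t^+2 * (lam 0%N - 2 * lam 0%N * c^+2 + c^+2 * rho).
    rewrite /u -scalemxAr mulmxBr -scalemxAr Mv1 !(dotvZl, dotvZr, dotvBl, dotvBr).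
    rewrite v1v1 (dotvC x v1) -/c -/rho (dotv_mul M v1 x) Msym Mv1 dotvZl -/c; ring.
  have : inf E <= rho - dotv u (M *m u) by apply: ge_inf.
  rewrite hMu => hi.
  have t2 : 0 <= t^+2 by apply: sqr_ge0.
  have key : rho - t^+2 * (lam 0%N - 2 * lam 0%N * c^+2 + c^+2 * rho) <= - eta.
    have -> : rho - t^+2 * (lam 0%N - 2 * lam 0%N * c^+2 + c^+2 * rho)
             = t^+2 * ((rho - lam 0%N) * (1 - 2 * c^+2)).
      rewrite -[X in X - _]mul1r -{1}ht; ring.
    have -> : - eta = t^+2 * (- eta * (1 - c^+2)) by rewrite mulrCA ht mulr1.
    apply: ler_wpM2l => //; rewrite /eta -/del.
    have hc0 : 0 <= c^+2 by apply: sqr_ge0.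
    have hdel : del = lam 0%N - lam 1%N by [].
    have q1 : 0 <= lam 0%N - rho - del / 2 by lra.
    have q2 : 0 <= 1 - 2 * c^+2 by lra.
    have q3 : 0 <= 1 / 5 - 7 / 10 * c^+2 by lra.
    have := mulr_ge0 q1 q2; have := mulr_ge0 (ltW del0) q3 => z1 z2; lra.
  have : inf E <= - eta by apply: le_trans hi key.
  move=> h; rewrite -normrN; apply: le_trans (ler_norm _); lra.
Qed.
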